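(* Let $L\ge1$. On $\mathbb{C}^2_0\otimes(\mathbb{C}^2)^{\otimes L}$ define, for $\lambda\in\mathbb{C}$, the monodromy matrix $R_{0L}(\lambda)\cdots R_{01}(\lambda)$, written as a $2\times 2$ matrix in the auxiliary space $0$ as $\begin{pmatrix}A(\lambda)&B(\lambda)\\ C(\lambda)&D(\lambda)\end{pmatrix}$ with entries operators on $(\mathbb{C}^2)^{\otimes L}$, where $R_{0j}(\lambda)$ acts on the auxiliary space and site $j$ by the matrix $$R(\lambda)=\begin{pmatrix}\lambda+i/2&0&0&0\\0&\lambda-i/2&i&0\\0&i&\lambda-i/2&0\\0&0&0&\lambda+i/2\end{pmatrix}$$ in the basis $e_1\otimes e_1,e_1\otimes e_2,e_2\otimes e_1,e_2\otimes e_2$. Let $|0\rangle=e_1^{\otimes L}$. Let $\lambda_1^\epsilon,\lambda_2^\epsilon$ be functions of $\epsilon$ with $\lambda_1^\epsilon=i/2+O(\epsilon)$ and $\lambda_2^\epsilon=-i/2+O(\epsilon)$ as $\epsilon\to0$. Then, as $\epsilon\to 0$, $$B(\lambda_1^\epsilon)B(\lambda_2^\epsilon)|0\rangle=\begin{cases}O(\epsilon^L)&\text{if }\lambda_1^\epsilon-\lambda_2^\epsilon-i=O(\epsilon^L),\\ O(\lambda_1^\epsilon-\lambda_2^\epsilon-i)&\text{otherwise.}\end{cases}$$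
   Context: $e_1=(1,0)^T$, $e_2=(0,1)^T$ is the standard basis of $\mathbb{C}^2$. In $R_{0j}(\lambda)$ the first tensor factor is the auxiliary space $\mathbb{C}^2_0$ and the second is the $j$-th site of the chain; the product $R_{0L}\cdots R_{01}$ is an operator on $\mathbb{C}^2_0\otimes(\mathbb{C}^2)^{\otimes L}$, and $A,B,C,D$ are its matrix blocks with respect to the auxiliary space. *)

(* Defs.v *)
From HB Require Import structures.
From mathcomp Require Import all_boot all_order all_algebra.
From mathcomp Require Import complex.
Set Implicit Arguments. Unset Strict Implicit. Unset Printing Implicit Defensive.
Import Order.TTheory GRing.Theory Num.Theory.
Local Open Scope ring_scope.
Local Open Scope complex_scope.

Section XXZ.
Variable R : rcfType.
Local Notation C := R[i].

Definition e1 : 'I_2 := ord0.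
Definition e2 : 'I_2 := ord_max.

(* The R-matrix: (Rmat lam (a,s) (b,t)) is the entry in row e_a (x) e_s and
   column e_b (x) e_t, first factor = auxiliary space, second = site. *)
Definition Rmat (lam : C) (a s b t : 'I_2) : C :=
  if (a == b) && (s == t) then
    (if a == s then lam + 'i / 2%:R else lam - 'i / 2%:R)
  else if (a == t) && (s == b) then 'i else 0.

(* basis of (C^2)^{(x) L}: configurations s : 'I_L -> 'I_2 *)
Definition config (L : nat) := {ffun 'I_L -> 'I_2}.

(* vectors of (C^2)^{(x) L} and of C^2_0 (x) (C^2)^{(x) L} *)
Definition vec (L : nat) := config L -> C.
Definition avec (L : nat) := 'I_2 -> config L -> C.

Definition setsite L (s : config L) (j : 'I_L) (t : 'I_2) : config L :=
  [ffun k => if k == j then t else s k].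

Definition R0j L (lam : C) (j : 'I_L) (psi : avec L) : avec L :=
  fun a s => \sum_(b < 2) \sum_(t < 2)
     Rmat lam a (s j) b t * psi b (setsite s j t).

(* monodromy R_{0L}(lam) ... R_{01}(lam): R_{01} is applied first *)
Definition monodromy L (lam : C) (psi : avec L) : avec L :=
  foldl (fun phi j => R0j lam j phi) psi (enum 'I_L).

(* matrix block (a,b) of the monodromy w.r.t. the auxiliary space *)
Definition mblock L (a b : 'I_2) (lam : C) (v : vec L) : vec L :=
  monodromy lam (fun c s => if c == b then v s else 0) a.

Definition opA L := @mblock L e1 e1.
Definition opB L := @mblock L e1 e2.
Definition opC L := @mblock L e2 e1.
Definition opD L := @mblock L e2 e2.

Definition vac L : vec L := fun s => if s == [ffun=> e1] then 1 else 0.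

Definition bigO (f g : R -> C) : Prop :=
  exists K : R, exists2 d : R, 0 < d &
    forall e : R, 0 < `|e| < d -> `|f e| <= K%:C * `|g e|.

Definition bigOv L (f : R -> vec L) (g : R -> C) : Prop :=
  exists K : R, exists2 d : R, 0 < d &
    forall e : R, 0 < `|e| < d -> forall s : config L,
      `|f e s| <= K%:C * `|g e|.

End XXZ.
Arguments vac {R} L.

(* Main.v *)
Require Import Defs.
From HB Require Import structures.
From mathcomp Require Import all_boot all_order all_algebra.
From mathcomp Require Import complex.
From mathcomp Require Import ring lra.
From Stdlib Require Import FunctionalExtensionality.
Import Order.TTheory GRing.Theory Num.Theory.
Local Open Scope ring_scope.
Local Open Scope complex_scope.

Set Implicit Arguments. Unset Strict Implicit. Unset Printing Implicit Defensive.

Section Struct.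
Variable R : rcfType.
Local Notation C := R[i].
Variable L : nat.

Definition bvec := 'I_2 -> 'I_2 -> config L -> C.
Definition Op1 (lam : C) (j : 'I_L) (P : bvec) : bvec :=
  fun a a' => R0j lam j (fun b s => P b a' s) a.
Definition Op2 (lam : C) (j : 'I_L) (P : bvec) : bvec :=
  fun a a' => R0j lam j (P a) a'.

Lemma setsite_same (s : config L) j t : setsite s j t j = t.
Proof. by rewrite /setsite ffunE eqxx. Qed.

Lemma setsite_other (s : config L) j t k : k != j -> setsite s j t k = s k.
Proof. by rewrite /setsite ffunE => /negbTE ->. Qed.

Lemma setsite_twice (s : config L) j t t' :
  setsite (setsite s j t) j t' = setsite s j t'.
Proof. apply/ffunP=> k; rewrite /setsite !ffunE; by case: (k == j). Qed.

Lemma setsite_comm (s : config L) j k t t' : j != k ->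
  setsite (setsite s j t) k t' = setsite (setsite s k t') j t.
Proof.
move=> njk; apply/ffunP=> m; rewrite /setsite !ffunE.
case: (eqVneq m k) => [->|]; last by [].
by rewrite eq_sym (negbTE njk).
Qed.

Lemma Op_comm l1 l2 j k P : j != k ->
  Op1 l1 j (Op2 l2 k P) = Op2 l2 k (Op1 l1 j P).
Proof.
move=> njk; apply: functional_extensionality => a.
apply: functional_extensionality => a'.
apply: functional_extensionality => s.
rewrite /Op1 /Op2 /R0j.
have e1' : forall t, setsite s j t k = s k by move=> t; rewrite setsite_other // eq_sym.
have e2' : forall t, setsite s k t j = s j by move=> t; rewrite setsite_other.
under eq_bigr => b _ do under eq_bigr => t _ do rewrite e1' big_distrr.
under [RHS]eq_bigr => b _ do under eq_bigr => t _ do rewrite e2' big_distrr.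
under eq_bigr => b _ do under eq_bigr => t _ do under eq_bigr => b' _ do rewrite big_distrr.
under [RHS]eq_bigr => b _ do under eq_bigr => t _ do under eq_bigr => b' _ do rewrite big_distrr.
under eq_bigr => b _ do rewrite exchange_big.
rewrite exchange_big.
apply: eq_bigr => b' _.
under eq_bigr => b _ do rewrite exchange_big.
rewrite exchange_big.
apply: eq_bigr => t' _.
apply: eq_bigr => b _; apply: eq_bigr => t _.
by rewrite /= setsite_comm // mulrCA.
Qed.

Lemma foldl_Op1_Op2 l1 l2 k (l : seq 'I_L) P : k \notin l ->
  foldl (fun P j => Op1 l1 j P) (Op2 l2 k P) l =
  Op2 l2 k (foldl (fun P j => Op1 l1 j P) P l).
Proof.
elim: l P => [|j l IH] P //=.
rewrite inE negb_or => /andP[nkj nkl].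
by rewrite Op_comm 1?eq_sym // IH.
Qed.

Lemma interleave l1 l2 (l : seq 'I_L) P : uniq l ->
  foldl (fun P j => Op1 l1 j P) (foldl (fun P j => Op2 l2 j P) P l) l =
  foldl (fun P j => Op1 l1 j (Op2 l2 j P)) P l.
Proof.
elim/last_ind: l => [|l k IH] //.
rewrite rcons_uniq => /andP[nkl ul].
by rewrite !foldl_rcons foldl_Op1_Op2 // IH.
Qed.

Lemma mon1 lam (l : seq 'I_L) P a a' s :
  foldl (fun P j => Op1 lam j P) P l a a' s =
  foldl (fun phi j => R0j lam j phi) (fun b s => P b a' s) l a s.
Proof. by elim: l P => [|j l IH] P //=; rewrite IH. Qed.

Lemma mon2 lam (l : seq 'I_L) P a a' s :
  foldl (fun P j => Op2 lam j P) P l a a' s =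
  foldl (fun phi j => R0j lam j phi) (P a) l a' s.
Proof. by elim: l P => [|j l IH] P //=; rewrite IH. Qed.

Lemma R0j_zero lam (j : 'I_L) : R0j lam j (fun _ _ => 0 : C) = (fun _ _ => 0).
Proof.
apply: functional_extensionality => a; apply: functional_extensionality => s.
by rewrite /R0j big1 // => b _; rewrite big1 // => t _; rewrite mulr0.
Qed.

Lemma mon_zero lam (l : seq 'I_L) :
  foldl (fun phi j => R0j lam j phi) (fun _ _ => 0 : C) l = (fun _ _ => 0).
Proof. by elim: l => [|j l IH] //=; rewrite R0j_zero. Qed.

End Struct.

Section Prefix.
Variable R : rcfType.
Local Notation C := R[i].
Variable L : nat.
Variables lamA lamB : C.

Lemma sum2 (F : 'I_2 -> C) : \sum_(t < 2) F t = F e1 + F e2.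
Proof.
rewrite !big_ord_recr big_ord0 /= add0r.
by congr (F _ + F _); apply: val_inj.
Qed.

Definition sat (s : config L) (n : nat) : 'I_2 :=
  match (insub n : option 'I_L) with Some j => s j | None => e1 end.

Fixpoint amp (s : config L) (k : nat) : 'I_2 -> 'I_2 -> C :=
  match k with
  | 0 => fun a a' => if (a == e2) && (a' == e2) then 1 else 0
  | k'.+1 => fun a a' => \sum_(b < 2) \sum_(t < 2) \sum_(b' < 2)
      Rmat lamA a (sat s k') b t * (Rmat lamB a' t b' e1 * amp s k' b b')
  end.

Definition okc (s : config L) (k : nat) :=
  [forall j : 'I_L, (k <= j)%N ==> (s j == e1)].

Definition Snat (n : nat) (P : bvec R L) : bvec R L :=
  match (insub n : option 'I_L) with
  | Some j => Op1 lamA j (Op2 lamB j P) | None => P end.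

Lemma foldl_map_val (l : seq 'I_L) P :
  foldl (fun P j => Op1 lamA j (Op2 lamB j P)) P l =
  foldl (fun P n => Snat n P) P (map val l).
Proof. by elim: l P => [|j l IH] P //=; rewrite IH /Snat valK. Qed.

Lemma amp_ext s s' k : (forall n, (n < k)%N -> sat s n = sat s' n) ->
  forall a a', amp s k a a' = amp s' k a a'.
Proof.
elim: k => [|k IH] H a a' //=.
rewrite H //; apply: eq_bigr => b _; apply: eq_bigr => t _; apply: eq_bigr => b' _.
by rewrite IH // => n hn; apply: H; apply: ltnW.
Qed.

Lemma okc_set s (j : 'I_L) t :
  okc (setsite s j t) j = (t == e1) && okc s j.+1.
Proof.
apply/forallP/andP.
- move=> H; split.
    by have := H j; rewrite leqnn setsite_same.
  apply/forallP => m; apply/implyP => hm.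
  have := H m; rewrite (ltnW hm) /= setsite_other //.
  by apply/eqP => mj; rewrite mj ltnn in hm.
- case=> /eqP -> /forallP H m; apply/implyP => hm.
  case: (eqVneq m j) => [->|mj]; first by rewrite setsite_same.
  rewrite setsite_other //.
  have hm' : (j < m)%N by rewrite ltn_neqAle hm andbT; apply: contra mj => /eqP/val_inj ->.
  by have := H m; rewrite hm'.
Qed.

Variable Phi : bvec R L.
Hypothesis Phi0 : forall a a' s, Phi a a' s = if okc s 0 then amp s 0 a a' else 0.

Lemma Snat_lt k (hk : (k < L)%N) P : Snat k P = Op1 lamA (Ordinal hk) (Op2 lamB (Ordinal hk) P).
Proof. by rewrite /Snat (insubT (fun n => n < L)%N hk). Qed.

Lemma stepS (j : 'I_L) P a a' s : Op1 lamA j (Op2 lamB j P) a a' s =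
  \sum_(b < 2) \sum_(t < 2) Rmat lamA a (s j) b t *
   \sum_(b' < 2) \sum_(t' < 2) Rmat lamB a' t b' t' * P b b' (setsite s j t').
Proof.
rewrite /Op1 /Op2 /R0j; apply: eq_bigr => b _; apply: eq_bigr => t _.
by congr (_ * _); apply: eq_bigr => b' _; apply: eq_bigr => t' _;
  rewrite setsite_same setsite_twice.
Qed.

Lemma prefix_amp k : (k <= L)%N -> forall a a' s,
  foldl (fun P n => Snat n P) Phi (iota 0 k) a a' s =
  if okc s k then amp s k a a' else 0.
Proof.
elim: k => [|k IH] hk a a' s; first by rewrite /= Phi0.
rewrite -addn1 iotaD foldl_cat add0n addn1.
have hk' : (k < L)%N by [].
rewrite [foldl _ _ [:: k]]/= (Snat_lt hk') stepS.
set j := Ordinal hk'.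
set Psi := foldl _ Phi _.
have IH' : forall b b' t', Psi b b' (setsite s j t') =
   if (t' == e1) && okc s k.+1 then amp s k b b' else 0.
  move=> b b' t'.
  have E : okc (setsite s j t') k = (t' == e1) && okc s k.+1 := okc_set s j t'.
  rewrite /Psi IH; last exact: ltnW.
  rewrite E.
  case: (_ && _) => //; apply: amp_ext => n hn.
  rewrite /sat; case: insubP => // m _ vm.
  rewrite setsite_other //; apply/eqP => mj.
  by rewrite -vm mj /= ltnn in hn.
under eq_bigr => b _ do under eq_bigr => t _ do under eq_bigr => b' _ do
  under eq_bigr => t' _ do rewrite IH'.
have sk : sat s k = s j by rewrite /sat (insubT (fun n => n < L)%N hk').
case: (okc s k.+1).
  rewrite [amp _ _.+1]/= sk.
  apply: eq_bigr => b _; apply: eq_bigr => t _; rewrite big_distrr.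
  apply: eq_bigr => b' _; rewrite sum2 andbT eqxx.
  have -> : (e2 == e1) = false by [].
  by rewrite mulr0 addr0.
rewrite big1 // => b _; rewrite big1 // => t _; rewrite big1 ?mulr0 // => b' _.
by rewrite big1 // => t' _; rewrite andbF mulr0.
Qed.

End Prefix.

Section T.
Variable R : rcfType.
Local Notation C := R[i].
Variable L : nat.
Variables lamA lamB : C.

Lemma ord2P (x : 'I_2) : x = e1 \/ x = e2.
Proof. case: x => [[|[|n]] h]; [left|right|by []]; exact: val_inj. Qed.

Lemma amp_S (s : config L) k a a' : amp lamA lamB s k.+1 a a' =
  \sum_(b < 2) \sum_(t < 2) \sum_(b' < 2)
      Rmat lamA a (sat s k) b t * (Rmat lamB a' t b' e1 * amp lamA lamB s k b b').
Proof. by []. Qed.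

Lemma e12 : (e1 == e2) = false. Proof. by []. Qed.
Lemma e21 : (e2 == e1) = false. Proof. by []. Qed.

Local Notation ci := (Complex 0 1 : R[i]).
Lemma imE : (Num.imaginary : R[i]) = ci. Proof. by []. Qed.
Local Notation aA := (lamA + ci / 2%:R).
Local Notation bA := (lamA - ci / 2%:R).
Local Notation aB := (lamB + ci / 2%:R).
Local Notation bB := (lamB - ci / 2%:R).
Local Notation c s k a a' := (amp lamA lamB s k a a').

Ltac solve_t := let s := fresh "s" in let k := fresh "k" in
  intros s k; rewrite amp_S !sum2 /Rmat /=;
  case: (ord2P (sat s k)) => ->; rewrite ?eqxx ?e12 ?e21 /= ?imE; ring.

Lemma t22 : forall (s : config L) k, c s k.+1 e2 e2 =
  if sat s k == e1 then bA * bB * c s k e2 e2 else 0.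
Proof. solve_t. Qed.
Lemma t21 : forall (s : config L) k, c s k.+1 e2 e1 =
  if sat s k == e1 then aB * bA * c s k e2 e1 + ci * ci * c s k e1 e2 else ci * aA * c s k e2 e2.
Proof. solve_t. Qed.
Lemma t12 : forall (s : config L) k, c s k.+1 e1 e2 =
  if sat s k == e1 then aA * bB * c s k e1 e2 else ci * bB * c s k e2 e2.
Proof. solve_t. Qed.
Lemma t11 : forall (s : config L) k, c s k.+1 e1 e1 =
  if sat s k == e1 then aA * aB * c s k e1 e1 else ci * aB * c s k e2 e1 + ci * bA * c s k e1 e2.
Proof. solve_t. Qed.
End T.

Section NumB.
Variable R : rcfType.
Local Notation C := R[i].
Definition nrm (x : C) : R := Normc.normc x.

Lemma nrm_ge0 (x : C) : 0 <= nrm x.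
Proof. by case: x => a b; rewrite /nrm /Normc.normc sqrtr_ge0. Qed.

Lemma nrmM (x y : C) : nrm (x * y) = nrm x * nrm y.
Proof. exact: Normc.normcM. Qed.
Lemma nrmN (x : C) : nrm (- x) = nrm x.
Proof. exact: normcN. Qed.

Lemma nrmD (x y : C) : nrm (x + y) <= nrm x + nrm y.
Proof. exact: le_normcD. Qed.

Lemma nrmB (x y : C) : nrm (x - y) <= nrm x + nrm y.
Proof. by have := nrmD x (- y); rewrite nrmN. Qed.

Lemma nrm0 : nrm 0 = 0. Proof. exact: Normc.normc0. Qed.
Lemma nrm1 : nrm 1 = 1. Proof. exact: Normc.normc1. Qed.

Lemma nrmi : nrm (Complex 0 1) = 1.
Proof. by rewrite /nrm /Normc.normc expr0n /= expr1n add0r sqrtr1. Qed.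

Lemma nrmM2 (x y : C) a b : nrm x <= a -> nrm y <= b -> nrm (x * y) <= a * b.
Proof.
move=> hx hy; rewrite nrmM; apply: ler_pM => //; exact: nrm_ge0.
Qed.

Lemma keyC (u d A B : C) r P Ka Kb :
  nrm u <= r -> r <= 1 -> 0 <= P -> 0 <= Ka -> 0 <= Kb ->
  nrm A <= Ka * (nrm d + P) -> nrm B <= Kb ->
  nrm (u * A + d * B) <= (Ka + Kb) * (nrm d + r * P).
Proof.
move=> hu hr hP hKa hKb hA hB.
have hu0 := nrm_ge0 u; have hd0 := nrm_ge0 d; have hA0 := nrm_ge0 A.
have hB0 := nrm_ge0 B.
have h1 : nrm u * nrm A <= r * (Ka * (nrm d + P)) by apply: ler_pM.
have h2 : nrm d * nrm B <= nrm d * Kb by apply: ler_wpM2l.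
have h3 : 0 <= Ka * (nrm d * (1 - r)).
  by apply: mulr_ge0 => //; apply: mulr_ge0 => //; lra.
have h4 : 0 <= Kb * (r * P) by apply: mulr_ge0 => //; apply: mulr_ge0 => //; lra.
apply: le_trans (nrmD _ _) _; rewrite !nrmM.
lra.
Qed.

Definition Inv (nd K P : R) (c22 c21 c12 c11 : C) :=
  [/\ nrm c22 <= K * (nd + P), nrm c11 <= K * (nd + P),
      nrm (c21 + c12) <= K * (nd + P), nrm c21 <= K & nrm c12 <= K].

Lemma weakK (a b x : R) : 0 <= x -> a <= b -> a * x <= b * x.
Proof. by move=> hx hab; apply: ler_wpM2r. Qed.

Lemma n_ud (u d : C) r : nrm u <= r -> r <= 1 -> nrm d <= 1 -> nrm (u + d) <= 2.
Proof. move=> hu hr1 hd. apply: le_trans (nrmD _ _) _. move: hu hr1 hd. clear. move=> *. lra. Qed.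
Lemma n_uci (u ci : C) r : nrm u <= r -> r <= 1 -> nrm ci = 1 -> nrm (u - ci) <= 2.
Proof. move=> hu hr1 hni. by apply: le_trans (nrmB _ _) _; rewrite hni; lra. Qed.
Lemma n_udci (u d ci : C) r : nrm u <= r -> r <= 1 -> nrm d <= 1 -> nrm ci = 1 -> nrm (u + d + ci) <= 3.
Proof. move=> hu hr1 hd hni. apply: le_trans (nrmD _ _) _; have := nrmD u d; rewrite hni; lra. Qed.

Lemma bndO (c d : C) K P : 0 <= K -> nrm d <= 1 -> P <= 1 -> nrm c <= K * (nrm d + P) -> nrm c <= 2 * K.
Proof. move=> hK hd hP1. move=> hc; apply: le_trans hc _; rewrite mulrC; apply: ler_wpM2r => //; lra. Qed.

Lemma fin10 (K x : R) : 0 <= x -> forall Ka, Ka <= 10 * K -> Ka * x <= 10 * K * x.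
Proof. by move=> hx Ka hKa; apply: ler_wpM2r. Qed.

Lemma nndP (d : C) (r P : R) : 0 <= r -> 0 <= P -> 0 <= nrm d + r * P.
Proof. move=> hr0 hP0; have := nrm_ge0 d => hnd0. by apply: addr_ge0 => //; apply: mulr_ge0. Qed.

Lemma step1 (u d h ci : C) (r P K : R) (hci : ci = h + h) (hni : nrm ci = 1) (hu : nrm u <= r) (hr0 : 0 <= r) (hr1 : r <= 1) (hd : nrm d <= 1) (hP0 : 0 <= P) (hP1 : P <= 1) (hK : 0 <= K) c22 c21 c12 c11 : Inv (nrm d) K P c22 c21 c12 c11 ->
  Inv (nrm d) (10 * K) (r * P)
    ((u + h + d - h) * (u - h - h) * c22)
    ((u - h + h) * (u + h + d - h) * c21 + ci * ci * c12)
    ((u + h + d + h) * (u - h - h) * c12)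
    ((u + h + d + h) * (u - h + h) * c11).
Proof.
case=> h22 h11 hs h21 h12.
have hnd0 := nrm_ge0 d; have hnu0 := nrm_ge0 u.
have b22 := bndO hK hd hP1 h22.
have E1 : u - h - h = u - ci by rewrite hci; ring.
have E2 : u + h + d + h = u + d + ci by rewrite hci; ring.
have E3 : u + h + d - h = u + d by ring.
have E4 : u - h + h = u by ring.
rewrite E1 E2 E3 E4.
have nn := nndP d hr0 hP0.
split.
- have -> : (u + d) * (u - ci) * c22 = u * ((u - ci) * c22) + d * ((u - ci) * c22) by ring.
  apply: le_trans (keyC (Ka := 2 * K) (Kb := 4 * K) hu hr1 hP0 _ _ _ _) _.
  + by lra.
  + by lra.
  + rewrite -mulrA; apply: nrmM2 => //; exact: (n_uci hu hr1 hni).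
  + have -> : 4 * K = 2 * (2 * K) by ring.
    apply: nrmM2 => //; exact: (n_uci hu hr1 hni).
  + by apply: fin10 => //; lra.
- have -> : (u + d + ci) * u * c11 = u * ((u + d + ci) * c11) + d * 0 by ring.
  apply: le_trans (keyC (Ka := 3 * K) (Kb := 0) hu hr1 hP0 _ _ _ _) _.
  + by lra.
  + by lra.
  + rewrite -mulrA; apply: nrmM2 => //; exact: (n_udci hu hr1 hd hni).
  + by rewrite nrm0.
  + by apply: fin10 => //; lra.
- have -> : u * (u + d) * c21 + ci * ci * c12 + (u + d + ci) * (u - ci) * c12 =
     u * ((u + d) * (c21 + c12)) + d * (- ci * c12) by rewrite hci; ring.
  apply: le_trans (keyC (Ka := 2 * K) (Kb := K) hu hr1 hP0 _ _ _ _) _.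
  + by lra.
  + by lra.
  + rewrite -mulrA; apply: nrmM2 => //; exact: (n_ud hu hr1 hd).
  + have -> : K = 1 * K by ring.
    by apply: nrmM2 => //; rewrite nrmN hni.
  + by apply: fin10 => //; lra.
- apply: le_trans (nrmD _ _) _.
  have t1 : nrm (u * (u + d) * c21) <= 1 * 2 * K.
    apply: nrmM2 => //; apply: nrmM2 => //; [lra | exact: (n_ud hu hr1 hd)].
  have t2 : nrm (ci * ci * c12) <= 1 * 1 * K.
    by apply: nrmM2 => //; apply: nrmM2 => //; rewrite hni.
  lra.
- have t1 : nrm ((u + d + ci) * (u - ci) * c12) <= 3 * 2 * K.
    apply: nrmM2 => //; apply: nrmM2; [exact: (n_udci hu hr1 hd hni) | exact: (n_uci hu hr1 hni)].
  lra.
Qed.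

Lemma step2 (u d h ci : C) (r P K : R) (hci : ci = h + h) (hni : nrm ci = 1) (hu : nrm u <= r) (hr0 : 0 <= r) (hr1 : r <= 1) (hd : nrm d <= 1) (hP0 : 0 <= P) (hP1 : P <= 1) (hK : 0 <= K) c22 c21 c12 c11 : Inv (nrm d) K P c22 c21 c12 c11 ->
  Inv (nrm d) (10 * K) (r * P)
    0
    (ci * (u + h + d + h) * c22)
    (ci * (u - h - h) * c22)
    (ci * (u - h + h) * c21 + ci * (u + h + d - h) * c12).
Proof.
case=> h22 h11 hs h21 h12.
have hnd0 := nrm_ge0 d; have hnu0 := nrm_ge0 u.
have b22 := bndO hK hd hP1 h22.
have E1 : u - h - h = u - ci by rewrite hci; ring.
have E2 : u + h + d + h = u + d + ci by rewrite hci; ring.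
have E3 : u + h + d - h = u + d by ring.
have E4 : u - h + h = u by ring.
rewrite E1 E2 E3 E4.
have nn := nndP d hr0 hP0.
split.
- by rewrite nrm0; apply: mulr_ge0 => //; lra.
- have -> : ci * u * c21 + ci * (u + d) * c12 = u * (ci * (c21 + c12)) + d * (ci * c12) by ring.
  apply: le_trans (keyC (Ka := K) (Kb := K) hu hr1 hP0 _ _ _ _) _.
  + by lra.
  + by lra.
  + have -> : K * (nrm d + P) = 1 * (K * (nrm d + P)) by ring.
    by apply: nrmM2 => //; rewrite hni.
  + have -> : K = 1 * K by ring.
    by apply: nrmM2 => //; rewrite hni.
  + by apply: fin10 => //; lra.
- have -> : ci * (u + d + ci) * c22 + ci * (u - ci) * c22 =
     u * ((ci + ci) * c22) + d * (ci * c22) by ring.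
  apply: le_trans (keyC (Ka := 2 * K) (Kb := 2 * K) hu hr1 hP0 _ _ _ _) _.
  + by lra.
  + by lra.
  + rewrite -mulrA; apply: nrmM2 => //; apply: le_trans (nrmD _ _) _; rewrite hni; lra.
  + have -> : 2 * K = 1 * (2 * K) by ring.
    by apply: nrmM2 => //; rewrite hni.
  + by apply: fin10 => //; lra.
- have t1 : nrm (ci * (u + d + ci) * c22) <= 1 * 3 * (2 * K).
    apply: nrmM2 => //; apply: nrmM2; [by rewrite hni | exact: (n_udci hu hr1 hd hni)].
  lra.
- have t1 : nrm (ci * (u - ci) * c22) <= 1 * 2 * (2 * K).
    apply: nrmM2 => //; apply: nrmM2; [by rewrite hni | exact: (n_uci hu hr1 hni)].
  lra.
Qed.

End NumB.
Arguments nrm : simpl never.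

Section Fin.
Variable R : rcfType.
Local Notation C := R[i].
Local Notation ci := (Complex 0 1 : R[i]).

Lemma amp_bound L (s : config L) (u d : C) r :
  nrm u <= r -> 0 <= r -> r <= 1 -> nrm d <= 1 -> forall k,
  Inv (nrm d) (10 ^+ k) (r ^+ k)
    (amp (u + ci / 2%:R + d) (u - ci / 2%:R) s k e2 e2)
    (amp (u + ci / 2%:R + d) (u - ci / 2%:R) s k e2 e1)
    (amp (u + ci / 2%:R + d) (u - ci / 2%:R) s k e1 e2)
    (amp (u + ci / 2%:R + d) (u - ci / 2%:R) s k e1 e1).
Proof.
move=> hu hr0 hr1 hd; have hnd := nrm_ge0 d.
elim=> [|k IH].
  have E0 : forall a a', amp (u + ci / 2%:R + d) (u - ci / 2%:R) s 0 a a' =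
    if (a == e2) && (a' == e2) then 1 else 0 by [].
  rewrite /Inv !E0 !expr0 !mul1r eqxx ?e12 ?e21 /= ?addr0 ?nrm1 ?nrm0.
  split; lra.
have hci : ci = ci / 2%:R + ci / 2%:R by rewrite -splitr.
have hP0 : 0 <= r ^+ k by apply: exprn_ge0.
have hP1 : r ^+ k <= 1 by apply: exprn_ile1.
have hK : 0 <= 10 ^+ k :> R by apply: exprn_ge0.
rewrite t22 t21 t12 t11 !exprS.
case: (sat s k == e1).
  exact: (step1 hci (nrmi R) hu hr0 hr1 hd hP0 hP1 hK IH).
exact: (step2 hci (nrmi R) hu hr0 hr1 hd hP0 hP1 hK IH).
Qed.


Lemma okc0 L (s : config L) : okc s 0 = (s == [ffun=> e1]).
Proof.
apply/forallP/eqP.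
  by move=> H; apply/ffunP => j; rewrite ffunE; have := H j; rewrite leq0n => /eqP.
by move=> -> j; rewrite ffunE eqxx implybT.
Qed.

Lemma okcL L (s : config L) : okc s L.
Proof. by apply/forallP => j; rewrite leqNgt ltn_ord. Qed.

Lemma vB L (lamA lamB : C) (s : config L) :
  opB lamA (opB lamB (vac L)) s = amp lamA lamB s L e1 e1.
Proof.
pose Phi : bvec R L := fun a a' s =>
  if a == e2 then (if a' == e2 then vac L s else 0) else 0.
pose Y := foldl (fun P j => Op2 lamB j P) Phi (enum 'I_L).
have HY : (fun c s => if c == e2 then opB lamB (vac L) s else 0) =
          (fun c s => Y c e1 s).
  apply: functional_extensionality => c; apply: functional_extensionality => s'.
  rewrite /Y mon2.
  case: (ord2P c) => ->; last first.
    rewrite eqxx /opB /mblock /monodromy /Phi eqxx; by [].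
  rewrite e12 /Phi e12.
  by rewrite (mon_zero lamB (enum 'I_L)).
rewrite {1}/opB /mblock /monodromy HY.
rewrite -(mon1 lamA (enum 'I_L) Y e1 e1 s) /Y interleave ?enum_uniq //.
rewrite foldl_map_val val_enum_ord.
rewrite (prefix_amp (lamA := lamA) (lamB := lamB) (Phi := Phi)) // ?okcL //.
move=> a a' s'; rewrite okc0 /Phi /vac.
case: (ord2P a) => ->; case: (ord2P a') => ->; rewrite ?eqxx ?e12 ?e21;
  by case: (s' == _).
Qed.

End Fin.

Unset Implicit Arguments.

Lemma cnv (R : rcfType) (x y : R[i]) (K : R) :
  (`|x| <= K%:C * `|y|) = (nrm x <= K * nrm y).
Proof.
change (((nrm x)%:C <= K%:C * (nrm y)%:C) = (nrm x <= K * nrm y)).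
by rewrite -rmorphM lecR.
Qed.

Lemma nrmC (R : rcfType) (e : R) : nrm (e%:C) = `|e|.
Proof. by rewrite /nrm /Normc.normc /= expr0n /= addr0 sqrtr_sqr. Qed.

Lemma nrmX (R : rcfType) (x : R[i]) n : nrm (x ^+ n) = nrm x ^+ n.
Proof. by elim: n => [|n IH]; rewrite ?expr0 ?nrm1 // !exprS nrmM IH. Qed.

Lemma E1gen (R : rcfType) (x y c1 c2 c' : R[i]) : c1 = c' -> c2 = c' -> y + c1 / 2%:R + c' / 2%:R + (x - y - c2) = x.
Proof. move=> -> ->; have := splitr c'; set h := c' / 2%:R; move=> ->; ring. Qed.

Lemma E2gen (R : rcfType) (y c c' : R[i]) : c = c' -> y + c / 2%:R - c' / 2%:R = y.
Proof. by move=> ->; ring. Qed.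

Lemma point (R : rcfType) (lamA lamB : R[i]) (L : nat) (s : config L) (e K1 K2 : R) :
  nrm (lamA - 'i / 2%:R) <= K1 * `|e| -> nrm (lamB + 'i / 2%:R) <= K2 * `|e| ->
  (`|K1| + `|K2| + 1) * `|e| < 1 ->
  nrm (opB lamA (opB lamB (vac L)) s) <=
    10 ^+ L * (nrm (lamA - lamB - 'i) + (`|K2| + 1) ^+ L * `|e| ^+ L).
Proof.
move=> H1 H2 HQ.
rewrite vB.
have he := normr_ge0 e.
have hK1 : K1 * `|e| <= `|K1| * `|e| by apply: ler_wpM2r => //; apply: ler_norm.
have hK2 : K2 * `|e| <= `|K2| * `|e| by apply: ler_wpM2r => //; apply: ler_norm.
have hK1' := normr_ge0 K1; have hK2' := normr_ge0 K2.
have hK1e : 0 <= `|K1| * `|e| by apply: mulr_ge0.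
have hK2e : 0 <= `|K2| * `|e| by apply: mulr_ge0.
set r := (`|K2| + 1) * `|e|.
have hu : nrm (lamB + 'i / 2%:R) <= r by rewrite /r; lra.
have hr0 : 0 <= r by rewrite /r; lra.
have hr1 : r <= 1 by rewrite /r; lra.
have Ed : lamA - lamB - 'i = (lamA - 'i / 2%:R) - (lamB + 'i / 2%:R).
  by rewrite [in LHS](splitr 'i); ring.
have hd : nrm (lamA - lamB - 'i) <= 1.
  by rewrite Ed; apply: le_trans (nrmB _ _) _; lra.
have := amp_bound s hu hr0 hr1 hd L.
rewrite (E1gen _ lamA lamB) // (E2gen _ lamB) //.
case=> _ H _ _ _.
by move: H; rewrite /r exprMn.
Qed.

Theorem lemma3 (R : rcfType) (L : nat) (hL : (0 < L)%N)
  (lam1 lam2 : R -> R[i])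
  (h1 : bigO (fun e => lam1 e - 'i / 2%:R) (fun e => e%:C))
  (h2 : bigO (fun e => lam2 e + 'i / 2%:R) (fun e => e%:C)) :
  let v := fun e => opB (lam1 e) (opB (lam2 e) (vac L)) in
  let d := fun e => lam1 e - lam2 e - 'i in
  (bigO d (fun e => e%:C ^+ L) -> bigOv v (fun e => e%:C ^+ L)) /\
  (bigO (fun e => e%:C ^+ L) d -> bigOv v d).
Proof.
move=> v d.
case: h1 => K1 [d1 d1p H1]; case: h2 => K2 [d2 d2p H2].
set Q := `|K1| + `|K2| + 1.
have Qp : 0 < Q by rewrite /Q; have := normr_ge0 K1; have := normr_ge0 K2; lra.
set d0 := Order.min (Order.min d1 d2) Q^-1.
have d0p : 0 < d0 by rewrite /d0 !lt_min d1p d2p invr_gt0 Qp.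
have base : forall e, 0 < `|e| < d0 -> forall s,
    nrm (v e s) <= 10 ^+ L * (nrm (d e) + (`|K2| + 1) ^+ L * `|e| ^+ L).
  move=> e /andP[e0 ed] s.
  move: ed; rewrite /d0 !lt_min => /andP[/andP[ed1 ed2] eQ].
  have := H1 e; rewrite e0 ed1 cnv nrmC => /(_ isT) he1.
  have := H2 e; rewrite e0 ed2 cnv nrmC => /(_ isT) he2.
  apply: point he1 he2 _.
  by rewrite mulrC -ltr_pdivlMr // div1r.
have M0 : 0 <= (`|K2| + 1) ^+ L :> R by apply: exprn_ge0; have := normr_ge0 K2; lra.
have T0 : 0 <= 10 ^+ L :> R by apply: exprn_ge0.
split.
- case=> K3 [d3 d3p H3].
  exists (10 ^+ L * (K3 + (`|K2| + 1) ^+ L)).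
  exists (Order.min d0 d3); first by rewrite lt_min d0p d3p.
  move=> e /andP[e0]; rewrite lt_min => /andP[ed0 ed3] s.
  have := H3 e; rewrite e0 ed3 cnv nrmX nrmC => /(_ isT) he3.
  rewrite cnv nrmX nrmC.
  apply: le_trans (base e _ s) _; first by rewrite e0 ed0.
  rewrite -mulrA; apply: ler_wpM2l => //.
  lra.
- case=> K4 [d4 d4p H4].
  exists (10 ^+ L * (1 + (`|K2| + 1) ^+ L * K4)).
  exists (Order.min d0 d4); first by rewrite lt_min d0p d4p.
  move=> e /andP[e0]; rewrite lt_min => /andP[ed0 ed4] s.
  have := H4 e; rewrite e0 ed4 cnv nrmX nrmC => /(_ isT) he4.
  rewrite cnv.
  apply: le_trans (base e _ s) _; first by rewrite e0 ed0.
  rewrite -mulrA; apply: ler_wpM2l => //.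
  have : (`|K2| + 1) ^+ L * `|e| ^+ L <= (`|K2| + 1) ^+ L * (K4 * nrm (d e)).
    by apply: ler_wpM2l.
  lra.
Qed.
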